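(* Let $q\geq 3$ be odd, $x\in(0,1)$, and $\varepsilon>0$ with $V_\varepsilon:=(x-\varepsilon/2,x+\varepsilon/2)\subseteq(0,1)$. (i) For all $n\in\mathbb{N}$ and all $h\in W_{q,n}$, \[ \Big|\frac{m(h.V_\varepsilon)}{\mu(V_\varepsilon)}-x|h'(x)|\Big|\leq\Big(\Big|\frac{\varepsilon}{\mu(V_\varepsilon)}-x\Big|+\frac{\varepsilon}{x}\Big)\frac{m(h.V_\varepsilon)}{\varepsilon}. \] (ii) There exists $M>0$ (depending only on $x$, $\varepsilon$, $q$) such that for all $y\in(0,1]$, all $n\in\mathbb{N}$ and all $h\in W_{q,n}$ with $y\in h.V_\varepsilon$, \[ \Big|\frac{m(h.V_\varepsilon\cap(0,y])}{\mu(V_\varepsilon)}-x|h'(x)|\,\delta_{h.x}((0,y])\Big|\leq\frac{M}{n^2}. \]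
   Context: Let $\lambda=2\cos(\pi/q)$. Elements of $\mathrm{PGL}_2(\mathbb{R})$ are written as matrices (up to nonzero scalar) and act on $\mathbb{R}\cup\{\infty\}$ by $\begin{bmatrix}a&b\\c&d\end{bmatrix}.x=(ax+b)/(cx+d)$. Put $s(x)=\sin(x\pi/q)/\sin(\pi/q)$, $g_k=\begin{bmatrix}s(k)&-s(k+1)\\-s(k-1)&s(k)\end{bmatrix}$, $Q=\begin{bmatrix}0&1\\1&0\end{bmatrix}$, $K=\{(q+1)/2,\dots,q-1\}$, $\Lambda_q=\{g_k^{-1},(Qg_k)^{-1}:k\in K\}$; $W_{q,n}$ denotes the set of words of length $n$ over $\Lambda_q$ (products of $n$ elements of $\Lambda_q$ in the free semigroup they generate). For $h\in\mathrm{PGL}_2(\mathbb{R})$, $h'$ is the derivative of $x\mapsto h.x$, and $h.V$ is the image of a set $V$. $m$ is Lebesgue measure, $\mu$ the measure with density $1/t$ with respect to $m$ (so $\mu(V_\varepsilon)=\log\frac{x+\varepsilon/2}{x-\varepsilon/2}$), and $\delta_z$ the Dirac measure at $z$. *)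

(* Defs.v *)
From HB Require Import structures.
From mathcomp Require Import all_boot all_order all_algebra.
From mathcomp Require Import all_classical all_reals all_analysis.
Set Implicit Arguments. Unset Strict Implicit. Unset Printing Implicit Defensive.
Import Order.TTheory GRing.Theory Num.Theory.
Local Open Scope classical_set_scope.
Local Open Scope ring_scope.

Section Defs.
Variable R : realType.

Definition mx2 (a b c d : R) : 'M[R]_2 :=
  \matrix_(i < 2, j < 2)
    if i == ord0 then (if j == ord0 then a else b) else (if j == ord0 then c else d).

(* Moebius action of a matrix (= its class in PGL_2(R)) on R *)
Definition mob (A : 'M[R]_2) (x : R) : R :=
  (A ord0 ord0 * x + A ord0 ord_max) / (A ord_max ord0 * x + A ord_max ord_max).

Definition mob_img (A : 'M[R]_2) (V : set R) : set R := mob A @` V.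

Definition sq (q : nat) (x : R) : R := sin (x * pi / q%:R) / sin (pi / q%:R).

Definition gk (q k : nat) : 'M[R]_2 :=
  mx2 (sq q k%:R) (- sq q (k.+1)%:R) (- sq q (k.-1)%:R) (sq q k%:R).

Definition Qmx : 'M[R]_2 := mx2 0 1 1 0.

Definition Kset (q k : nat) : Prop := ((q.+1)./2 <= k)%N /\ (k <= q.-1)%N.

Definition Lam (q : nat) : set 'M[R]_2 :=
  [set A | exists k, Kset q k /\ (A = invmx (gk q k) \/ A = invmx (Qmx *m gk q k))].

Definition Wq (q n : nat) : set 'M[R]_2 :=
  [set h | exists s : seq 'M[R]_2,
     size s = n /\ (forall A, A \in s -> Lam q A) /\ h = foldr (@mulmx R 2 2 2) 1%:M s].

Definition Veps (x eps : R) : set R := `](x - eps / 2), (x + eps / 2)[%classic.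

(* mu(V_eps), mu having density 1/t w.r.t. Lebesgue measure *)
Definition muV (x eps : R) : R := ln ((x + eps / 2) / (x - eps / 2)).

Definition leb (A : set R) : \bar R := (@lebesgue_measure R A).

End Defs.

(* Main.v *)
Require Import Defs.
From HB Require Import structures.
From mathcomp Require Import all_boot all_order all_algebra.
From mathcomp Require Import all_classical all_reals all_analysis.
From mathcomp Require Import ring lra.
Import Order.TTheory GRing.Theory Num.Theory.
Set Implicit Arguments. Unset Strict Implicit.
Local Open Scope classical_set_scope.
Local Open Scope ring_scope.

Lemma moeb_derive (R : realType) (a b c d x : R) : c * x + d != 0 ->
  derive1 (fun t => (a * t + b) / (c * t + d)) x = (a * d - b * c) / (c * x + d) ^+ 2.
Proof.
move=> hx.
have H1 : is_derive x 1 (fun t => a * t + b) a.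
  apply: is_derive_eq.
  by rewrite addr0 /GRing.scale /= mulr1.
have H2 : is_derive x 1 (fun t => c * t + d) c.
  apply: is_derive_eq.
  by rewrite addr0 /GRing.scale /= mulr1.
have H3 := @is_deriveV R (fun t => c * t + d) x c 1 hx H2.
have H4 := is_deriveM H1 H3.
rewrite derive1E; have -> : (fun t => (a * t + b) / (c * t + d)) = ((fun t => a * t + b) * (fun y => (c * y + d)^-1)) by []. rewrite derive_val.
rewrite /GRing.scale /=.
field. exact: hx.
Qed.
Section M.
Variable R : realType.
Lemma mx2E (a b c d : R) :
  [/\ mx2 a b c d ord0 ord0 = a, mx2 a b c d ord0 ord_max = b,
      mx2 a b c d ord_max ord0 = c & mx2 a b c d ord_max ord_max = d].
Proof. by rewrite !mxE. Qed.

Lemma mx2_eta (A : 'M[R]_2) :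
  A = mx2 (A ord0 ord0) (A ord0 ord_max) (A ord_max ord0) (A ord_max ord_max).
Proof.
apply/matrixP => i j; rewrite !mxE.
case: i => [[|[|i]] Hi]; case: j => [[|[|j]] Hj] //=;
  by congr (A _ _); apply: val_inj.
Qed.

Lemma mx2_mul (a b c d a' b' c' d' : R) :
  mx2 a b c d *m mx2 a' b' c' d' =
  mx2 (a * a' + b * c') (a * b' + b * d') (c * a' + d * c') (c * b' + d * d').
Proof.
apply/matrixP => i j; rewrite !mxE big_ord_recr big_ord1 /= !mxE.
by case: i => [[|[|i]] Hi]; case: j => [[|[|j]] Hj].
Qed.

Lemma mx2_one : (1%:M : 'M[R]_2) = mx2 1 0 0 1.
Proof.
apply/matrixP => i j; rewrite !mxE.
by case: i => [[|[|i]] Hi]; case: j => [[|[|j]] Hj].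
Qed.

Lemma invmx_uniq (A B : 'M[R]_2) : A *m B = 1%:M -> invmx A = B.
Proof.
move=> AB; have [uA _] := mulmx1_unit AB.
by rewrite -[invmx A]mulmx1 -AB mulmxA mulVmx // mul1mx.
Qed.
End M.
Section T.
Variable R : realType.
Variable q : nat.
Hypothesis q3 : (3 <= q)%N.
Let Q : R := q%:R.
Let th : R := pi / Q.

Lemma Q_gt0 : 0 < Q. Proof. by rewrite /Q ltr0n; case: q q3. Qed.
Lemma th_gt0 : 0 < th. Proof. by rewrite /th divr_gt0 // ?pi_gt0 // Q_gt0. Qed.
Lemma pi_eq : pi = Q * th. Proof. by rewrite /th mulrC divfK // gt_eqF // Q_gt0. Qed.
Lemma Q_ge3 : 3 <= Q. Proof. by rewrite /Q (ler_nat R 3 q). Qed.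

Lemma sqE (j : R) : sq q j = sin (j * th) / sin th.
Proof. by rewrite /sq /th mulrA. Qed.

Lemma sin_th_gt0 : 0 < sin th.
Proof.
apply: sin_gt0_pi; rewrite th_gt0 /=.
have := pi_eq; have := th_gt0; have := Q_ge3; have := pi_gt0 R. nra.
Qed.

Lemma s_ge0 (j : nat) : (j <= q)%N -> 0 <= sq q (j%:R : R).
Proof.
move=> jq; rewrite sqE divr_ge0 //; last exact: ltW sin_th_gt0.
have jQ : (j%:R : R) <= Q by rewrite /Q ler_nat.
have j0 : (0 : R) <= j%:R by [].
apply: sin_ge0_pi.
have hp := pi_eq; have ht := th_gt0; apply/andP; split; nra.
Qed.

Lemma s_ge1 (j : nat) : (1 <= j)%N -> (j < q)%N -> 1 <= sq q (j%:R : R).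
Proof.
move=> j1 jq; rewrite sqE ler_pdivlMr ?sin_th_gt0 // mul1r -subr_ge0.
have jQ : (j%:R : R) + 1 <= Q by rewrite /Q natr1 ler_nat.
have j0 : (1 : R) <= j%:R by rewrite ler1n.
set u := (j%:R + 1) * th / 2; set v := (j%:R - 1) * th / 2.
have -> : j%:R * th = u + v by rewrite /u /v; field.
have -> : th = u - v by rewrite /u /v; field.
rewrite sinD sinB.
have -> : sin u * cos v + cos u * sin v - (sin u * cos v - cos u * sin v) = 2 * (cos u * sin v) by ring.
have ht := th_gt0; have hp := pi_eq.
apply: mulr_ge0 => //; apply: mulr_ge0.
  apply: cos_ge0_pihalf; rewrite /u; apply/andP; split; nra.
apply: sin_ge0_pi; rewrite /v; apply/andP; split; nra.
Qed.

Lemma s_id (k : nat) : (1 <= k)%N ->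
  sq q (k%:R : R) ^+ 2 - sq q k.+1%:R * sq q k.-1%:R = 1.
Proof.
move=> k1; rewrite !sqE.
have -> : (k.+1%:R : R) * th = k%:R * th + th by rewrite -natr1; ring.
have -> : (k.-1%:R : R) * th = k%:R * th - th.
  by rewrite -[in RHS](prednK k1) -natr1; ring.
set A := k%:R * th.
have hs := sin_th_gt0.
have key : sin A ^+ 2 - sin (A + th) * sin (A - th) = sin th ^+ 2.
  rewrite sinD sinB.
  have h1 := cos2Dsin2 A; have h2 := cos2Dsin2 th.
  have -> : sin A ^+ 2 - (sin A * cos th + cos A * sin th) * (sin A * cos th - cos A * sin th)
    = sin A ^+ 2 * (1 - cos th ^+ 2) + cos A ^+2 * sin th ^+ 2 by ring.
  by rewrite -sin2cos2 -mulrDl addrC h1 mul1r.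
have -> : (sin A / sin th) ^+ 2 - sin (A + th) / sin th * (sin (A - th) / sin th)
  = (sin A ^+ 2 - sin (A + th) * sin (A - th)) / sin th ^+ 2.
  by field; rewrite gt_eqF.
by rewrite key divff // expf_neq0 // gt_eqF.
Qed.
End T.

Section L.
Variable R : realType.

Definition goodL (A : 'M[R]_2) : Prop :=
  let a := A ord0 ord0 in let b := A ord0 ord_max in
  let c := A ord_max ord0 in let d := A ord_max ord_max in
  0 <= a /\ 0 <= b /\ 1 <= a + b /\ 1 <= c /\ 1 <= d /\ (a * d - b * c) ^+ 2 = 1.

Definition goodW (n : nat) (A : 'M[R]_2) : Prop :=
  let a := A ord0 ord0 in let b := A ord0 ord_max in
  let c := A ord_max ord0 in let d := A ord_max ord_max in
  0 <= a /\ 0 <= b /\ 0 <= c /\ 1 <= d /\ 1 <= a + b /\ n.+1%:R <= c + d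
   /\ (a * d - b * c) ^+ 2 = 1.

Lemma Lam_good (q : nat) (A : 'M[R]_2) : (3 <= q)%N -> Lam q A -> goodL A.
Proof.
move=> q3 [k [[k1 k2] HA]].
have k2' : (2 <= k)%N.
  by apply: leq_trans k1; case: q q3 {k2 HA} => [|[|[|q]]].
have kq : (k < q)%N by apply: leq_ltn_trans k2 _; case: q q3 {k1 HA}.
set s := sq q (k%:R : R); set s1 := sq q (k.+1%:R : R); set s0 := sq q (k.-1%:R : R).
have hs : 1 <= s.
  by apply: s_ge1 => //; exact: leq_trans k2'.
have hs0 : 1 <= s0.
  apply: s_ge1 => //; first by case: k k2' {k1 k2 HA s s1 s0 hs kq}=> [|[|k]].
  by apply: leq_ltn_trans (leq_pred k) _.
have hs1 : 0 <= s1 by apply: s_ge0.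
have hid : s ^+ 2 - s1 * s0 = 1 by apply: s_id => //; exact: leq_trans k2'.
have hGN : gk R q k *m mx2 s s1 s0 s = 1%:M.
  rewrite /gk -/s -/s1 -/s0 mx2_mul mx2_one.
  congr mx2; rewrite -?hid; ring.
have inv1 : invmx (gk R q k) = mx2 s s1 s0 s by apply: invmx_uniq.
have QQ : Qmx R *m Qmx R = (1%:M : 'M[R]_2).
  by rewrite /Qmx mx2_mul mx2_one; congr mx2; ring.
have inv2 : invmx (Qmx R *m gk R q k) = mx2 s1 s s s0.
  apply: invmx_uniq.
  have -> : mx2 s1 s s s0 = mx2 s s1 s0 s *m Qmx R.
    by rewrite /Qmx mx2_mul; congr mx2; ring.
  by rewrite -mulmxA (mulmxA (gk R q k)) hGN mul1mx QQ.
have e1 : s * s - s1 * s0 = 1 by rewrite -hid expr2.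
have e2 : s1 * s0 - s * s = -1 by rewrite -hid expr2; ring.
case: HA => ->; [rewrite inv1 | rewrite inv2]; rewrite /goodL !mxE /=.
  by do !split; try lra; rewrite e1 expr1n.
by do !split; try lra; rewrite e2 sqrrN expr1n.
Qed.

Lemma good_step n (A B : 'M[R]_2) : goodL A -> goodW n B -> goodW n.+1 (A *m B).
Proof.
rewrite (mx2_eta A) (mx2_eta B) mx2_mul /goodL /goodW !mxE /=.
set al := A ord0 ord0; set be := A ord0 ord_max; set ga := A ord_max ord0; set de := A ord_max ord_max.
set a := B ord0 ord0; set b := B ord0 ord_max; set c := B ord_max ord0; set d := B ord_max ord_max.
move=> [h1 [h2 [h3 [h4 [h5 h6]]]]] [g1 [g2 [g3 [g4 [g5 [g6 g7]]]]]].
have p1 : 0 <= al * a + al * b - al.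
  by have := mulr_ge0 h1 (_ : 0 <= a + b - 1); rewrite !mulrDr mulrN1; apply; lra.
have p2 : 0 <= be * c + be * d - be.
  by have := mulr_ge0 h2 (_ : 0 <= c + d - 1); rewrite !mulrDr mulrN1; apply; lra.
have p3 : 0 <= ga * a + ga * b - ga.
  by have := mulr_ge0 (_ : 0 <= ga) (_ : 0 <= a + b - 1); rewrite !mulrDr mulrN1; apply; lra.
have p4 : 0 <= de * c + de * d - (c + d).
  by have := mulr_ge0 (_ : 0 <= de - 1) (_ : 0 <= c + d); rewrite mulrBl mul1r !mulrDr; apply; lra.
have p5 : 0 <= de * d - d.
  by have := mulr_ge0 (_ : 0 <= de - 1) (_ : 0 <= d); rewrite mulrBl mul1r; apply; lra.
have p6 : 0 <= ga * b by apply: mulr_ge0; lra.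
have p7 : 0 <= ga * a by apply: mulr_ge0; lra.
have p8 : 0 <= de * c by apply: mulr_ge0; lra.
have n1 : (n.+2%:R : R) = n.+1%:R + 1 by rewrite -natr1.
do !split.
- by apply: addr_ge0; apply: mulr_ge0; lra.
- by apply: addr_ge0; apply: mulr_ge0; lra.
- by apply: addr_ge0; apply: mulr_ge0; lra.
- lra.
- lra.
- rewrite n1; lra.
- have -> : (al * a + be * c) * (ga * b + de * d) - (al * b + be * d) * (ga * a + de * c)
    = (al * de - be * ga) * (a * d - b * c) by ring.
  by rewrite exprMn h6 g7 mulr1.
Qed.

Lemma Wq_good (q n : nat) (h : 'M[R]_2) : (3 <= q)%N -> Wq q n h -> goodW n h.
Proof.
move=> q3 [s [<- [hs ->]]] {n h}.
elim: s hs => [|A s IH] hs /=.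
  rewrite mx2_one /goodW !mxE /=; do !split; lra.
apply: good_step.
  by apply: (Lam_good q3); apply: hs; rewrite inE eqxx.
by apply: IH => B hB; apply: hs; rewrite inE hB orbT.
Qed.
End L.

Section I.
Variable R : realType.
Variables a b c d : R.
Let f (t : R) := (a * t + b) / (c * t + d).
Let D := a * d - b * c.
Hypothesis hD : D ^+ 2 = 1.

Lemma fdiff s t : c * s + d != 0 -> c * t + d != 0 ->
  f t - f s = D * (t - s) / ((c * t + d) * (c * s + d)).
Proof. move=> hs ht; rewrite /f /D; field; apply/andP; split => //. Qed.

Lemma D_neq0 : D != 0.
Proof. by apply/eqP => h; move: hD; rewrite h expr0n /= => /eqP; rewrite eq_sym oner_eq0. Qed.

Lemma img_between lo hi : lo < hi -> 0 <= c -> 0 < c * lo + d ->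
  f @` `]lo, hi[ = [set y | 0 < (y - f lo) * (f hi - y)].
Proof.
move=> lh c0 Pp.
have posT t : lo <= t -> 0 < c * t + d.
  move=> lt; have : 0 <= c * (t - lo) by apply: mulr_ge0; lra.
  rewrite mulrBr; lra.
have Qp := posT hi (ltW lh).
apply/seteqP; split => [y [t /= ht <-] | y /= hy].
  rewrite in_itv /= in ht; case/andP: ht => h1 h2.
  have Tp := posT t (ltW h1).
  have e1 := fdiff (lt0r_neq0 Pp) (lt0r_neq0 Tp).
  have e2 := fdiff (lt0r_neq0 Tp) (lt0r_neq0 Qp).
  rewrite e1 e2.
  have -> : D * (t - lo) / ((c * t + d) * (c * lo + d)) * (D * (hi - t) / ((c * hi + d) * (c * t + d)))
    = (D ^+ 2) * ((t - lo) * (hi - t)) / ((c * t + d) * (c * lo + d) * ((c * hi + d) * (c * t + d))).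
    by field; rewrite !gt_eqF.
  rewrite hD mul1r; apply: divr_gt0; first by apply: mulr_gt0; lra.
  by apply: mulr_gt0; apply: mulr_gt0.
set u := f lo; set v := f hi.
have hy2 : 0 < (y - u) * (v - y) by exact: hy.
clear hy; rename hy2 into hy.
set w := a - c * y.
have wu : (a - c * u) * D = (c * lo + d)^-1.
  rewrite /u /f /D; apply: (mulIf (x := (c * lo + d))); first exact: lt0r_neq0.
  rewrite mulVf ?gt_eqF //. 
  have -> : (a - c * ((a * lo + b) / (c * lo + d))) = (a * d - b * c) / (c * lo + d).
    by field; rewrite gt_eqF.
  rewrite -/D. have := hD; rewrite expr2 => <-. by field; rewrite gt_eqF.
have wv : (a - c * v) * D = (c * hi + d)^-1.
  rewrite /v /f /D; apply: (mulIf (x := (c * hi + d))); first exact: lt0r_neq0.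
  rewrite mulVf ?gt_eqF //. 
  have -> : (a - c * ((a * hi + b) / (c * hi + d))) = (a * d - b * c) / (c * hi + d).
    by field; rewrite gt_eqF.
  rewrite -/D. have := hD; rewrite expr2 => <-. by field; rewrite gt_eqF.
have iP : 0 < (c * lo + d)^-1 by rewrite invr_gt0.
have iQ : 0 < (c * hi + d)^-1 by rewrite invr_gt0.
have iden : w * D * (v - u) = (a - c * u) * D * (v - y) + (a - c * v) * D * (y - u).
  by rewrite /w; ring.
have wD : 0 < w * D.
  have [uv|vu|uv] := ltgtP u v.
  - have h1 : u < y.
      rewrite ltNge; apply/negP => yu.
      have : (y - u) * (v - y) <= 0 by apply: mulr_le0_ge0; lra.
      lra.
    have h2 : y < v.
      rewrite ltNge; apply/negP => yu.
      have : (y - u) * (v - y) <= 0 by apply: mulr_ge0_le0; lra.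
      lra.
    have : 0 < w * D * (v - u).
      rewrite iden wu wv; apply: addr_gt0; apply: mulr_gt0; lra.
    by rewrite pmulr_lgt0 // subr_gt0.
  - have h1 : y < u.
      rewrite ltNge; apply/negP => yu.
      have : (y - u) * (v - y) <= 0 by apply: mulr_ge0_le0; lra.
      lra.
    have h2 : v < y.
      rewrite ltNge; apply/negP => yu.
      have : (y - u) * (v - y) <= 0 by apply: mulr_le0_ge0; lra.
      lra.
    have : 0 < w * D * (u - v).
      have -> : w * D * (u - v) = - (w * D * (v - u)) by ring.
      rewrite iden wu wv.
      have -> : forall p q : R, - (p * (v - y) + q * (y - u)) = p * (y - v) + q * (u - y) by move=> *; ring.
      apply: addr_gt0; apply: mulr_gt0; lra.
    by rewrite pmulr_lgt0 // subr_gt0.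
  - move: hy; rewrite uv.
    have -> : (y - v) * (v - y) = - ((y - v) ^+ 2) by ring.
    by rewrite oppr_gt0 ltNge sqr_ge0.
have w0 : w != 0 by apply/eqP => h; move: wD; rewrite h mul0r ltxx.
set t := (d * y - b) / w.
have Tt : c * t + d = D / w by rewrite /t /w /D; field.
have At : a * t + b = D * y / w by rewrite /t /w /D; field.
have Tp : 0 < c * t + d.
  rewrite Tt; have -> : D / w = D ^+ 2 / (w * D) by field; rewrite D_neq0.
  by rewrite hD divr_gt0.
have ft : f t = y.
  by rewrite /f Tt At; field; rewrite ?D_neq0 ?w0.
exists t => //.
have e1 := fdiff (lt0r_neq0 Pp) (lt0r_neq0 Tp).
have e2 := fdiff (lt0r_neq0 Tp) (lt0r_neq0 Qp).
move: hy; rewrite -ft -/u -/v in e1 e2 *.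
rewrite e1 e2.
have -> : D * (t - lo) / ((c * t + d) * (c * lo + d)) * (D * (hi - t) / ((c * hi + d) * (c * t + d)))
    = ((t - lo) * (hi - t)) * (D ^+ 2 / ((c * t + d) * (c * lo + d) * ((c * hi + d) * (c * t + d)))).
  by field; rewrite !gt_eqF.
rewrite hD pmulr_lgt0; last by rewrite divr_gt0 //; apply: mulr_gt0; apply: mulr_gt0.
move=> hp; rewrite in_itv /=; apply/andP; split.
  rewrite ltNge; apply/negP => yu.
  have : (t - lo) * (hi - t) <= 0 by apply: mulr_le0_ge0; lra.
  lra.
rewrite ltNge; apply/negP => yu.
have : (t - lo) * (hi - t) <= 0 by apply: mulr_ge0_le0; lra.
lra.
Qed.
End I.

Lemma leb_oo (R : realType) (a b : R) : a < b -> leb `]a, b[%classic = (b - a)%:E.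
Proof. move=> ab; rewrite /leb lebesgue_measure_itv /= lte_fin ab /=. by rewrite EFinB. Qed.
Lemma leb_oc (R : realType) (a b : R) : a < b -> leb `]a, b]%classic = (b - a)%:E.
Proof. move=> ab; rewrite /leb lebesgue_measure_itv /= lte_fin ab /=. by rewrite EFinB. Qed.
Lemma normD1 (R : realType) (D : R) : D ^+ 2 = 1 -> `|D| = 1.
Proof. move=> h; by apply/eqP; rewrite -sqr_norm_eq1 h. Qed.

Lemma part1_alg (R : realType) (eps x c d m : R) :
  0 < eps -> eps <= 1 -> 0 < x -> 0 <= c -> 0 <= d -> 0 < c * (x - eps / 2) + d ->
  `| eps / ((c * (x - eps / 2) + d) * (c * (x + eps / 2) + d)) * m - x * ((c * x + d) ^+ 2)^-1 |
  <= (`| eps * m - x | + eps / x) * (eps / ((c * (x - eps / 2) + d) * (c * (x + eps / 2) + d)) / eps).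
Proof.
move=> e0 e1 x0 c0 d0 Pp.
set P := c * (x - eps / 2) + d; set Q := c * (x + eps / 2) + d; set X := c * x + d.
have ce : 0 <= c * eps by apply: mulr_ge0 => //; lra.
have Qp : 0 < Q by rewrite /Q /P in Pp *; lra.
have Xp : 0 < X by rewrite /X /P in Pp *; lra.
have PQ : 0 < P * Q by apply: mulr_gt0.
set A := eps * m - x.
set B := x * (c * eps / 2) ^+ 2 / (P * Q * X ^+ 2).
have e : eps / (P * Q) * m - x * (X ^+ 2)^-1 = A / (P * Q) + B.
  rewrite /A /B /P /Q /X; field.
  have h1 : 0 < c * (x * 2 + eps) + d * 2 by rewrite /Q in Qp; lra.
  have h2 : 0 < c * (x * 2 - eps) + d * 2 by rewrite /P in Pp; lra.
  by rewrite !lt0r_neq0 //; rewrite /X in Xp.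
have B0 : 0 <= B.
  by rewrite /B; apply: divr_ge0; [apply: mulr_ge0; [lra| exact: sqr_ge0] | apply: ltW; apply: mulr_gt0 => //; exact: exprn_gt0].
have cxX : c * x <= X by rewrite /X; lra.
have cx0 : 0 <= c * x by apply: mulr_ge0; lra.
have X2 : (c * x) ^+ 2 <= X ^+ 2 by rewrite ler_sqr ?nnegrE //; lra.
have num : x ^+ 2 * (c * eps / 2) ^+ 2 <= eps * X ^+ 2.
  have -> : x ^+ 2 * (c * eps / 2) ^+ 2 = (c * x) ^+ 2 * (eps ^+ 2 / 4) by field.
  have -> : eps * X ^+ 2 = X ^+ 2 * eps by ring.
  apply: ler_pM => //; first exact: sqr_ge0.
    by apply: divr_ge0 => //; exact: sqr_ge0.
  rewrite ler_pdivrMr //; nra.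
have BB : B <= eps / x / (P * Q).
  rewrite -subr_ge0.
  have -> : eps / x / (P * Q) - B = (eps * X ^+ 2 - x ^+ 2 * (c * eps / 2) ^+ 2) / (x * X ^+ 2 * (P * Q)).
    by rewrite /B; field; rewrite !lt0r_neq0.
  apply: divr_ge0; first lra.
  by apply: ltW; apply: mulr_gt0 => //; apply: mulr_gt0 => //; exact: exprn_gt0.
rewrite e.
have -> : (`|A| + eps / x) * (eps / (P * Q) / eps) = `|A| / (P * Q) + eps / x / (P * Q).
  by field; rewrite !lt0r_neq0.
apply: (le_trans (ler_normD _ _)).
rewrite normrM normfV (gtr0_norm PQ) (ger0_norm B0).
by apply: lerD.
Qed.

Lemma part2_alg (R : realType) (eps x c d m r nn i : R) :
  0 < eps -> 0 <= x - eps / 2 -> x + eps / 2 <= 1 -> 0 < x ->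
  0 <= c -> 1 <= d -> nn + 1 <= c + d -> 1 <= nn -> (i = 0 \/ i = 1) ->
  0 <= r -> r <= eps / ((c * (x - eps / 2) + d) * (c * (x + eps / 2) + d)) ->
  (x - eps / 2 = 0 -> m = 0) ->
  `| r * m - x * ((c * x + d) ^+ 2)^-1 * i |
  <= (eps * `|m| / (x - eps / 2) ^+ 2 + x^-1) / nn ^+ 2.
Proof.
move=> e0 lo0 hi1 x0 c0 d1 cd n1 hi r0 rle hm.
set lo := x - eps / 2 in lo0 rle hm *.
have loE : lo = x - eps / 2 by [].
have lo1 : lo <= 1 by lra.
set P := c * lo + d; set Q := c * (x + eps / 2) + d; set X := c * x + d.
have nn0 : 0 < nn by lra.
have cx : c * lo <= c * x by apply: ler_wpM2l => //; rewrite /lo; lra.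
have cq : c * lo <= c * (x + eps / 2) by apply: ler_wpM2l => //; rewrite /lo; lra.
have cl0 : 0 <= c * lo by apply: mulr_ge0.
have Pp : 0 < P by rewrite /P; lra.
have Qp : 0 < Q by rewrite /Q; lra.
have Xp : 0 < X by rewrite /X; lra.
have T1 : `| r * m - x * (X ^+ 2)^-1 * i | <= r * `|m| + x * (X ^+ 2)^-1.
  apply: (le_trans (ler_normB _ _)).
  rewrite normrM (ger0_norm r0); apply: lerD => //.
  case: hi => ->; rewrite ?mulr0 ?normr0 ?mulr1.
    by apply: mulr_ge0; [lra | rewrite invr_ge0; apply: ltW; exact: exprn_gt0].
  by rewrite ger0_norm //; apply: mulr_ge0; [lra | rewrite invr_ge0; apply: ltW; exact: exprn_gt0].
apply: (le_trans T1); rewrite mulrDl; apply: lerD.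
  have [lz|lp] := eqVneq lo 0.
    by rewrite (hm lz) normr0 !mulr0 !mul0r.
  have lp' : 0 < lo by rewrite lt0r lp lo0.
  have Pn : lo * nn <= P.
    rewrite /P; have : lo * nn <= lo * (c + d - 1) by apply: ler_wpM2l; lra.
    have : lo * d <= d by rewrite ler_piMl //; lra.
    move=> h1 h2; have e : lo * (c + d - 1) = lo * c + lo * d - lo by ring.
    rewrite /P; lra.
  have Qn : lo * nn <= Q by rewrite /Q; rewrite /P in Pn; lra.
  have ln0 : 0 < lo * nn by apply: mulr_gt0.
  have PQ : (lo * nn) ^+ 2 <= P * Q by rewrite expr2; apply: ler_pM => //; lra.
  apply: (@le_trans _ _ (eps / (P * Q) * `|m|)); first by apply: ler_wpM2r.
  have -> : eps * `|m| / lo ^+ 2 / nn ^+ 2 = eps / (lo * nn) ^+ 2 * `|m|.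
    by rewrite exprMn; field; rewrite !lt0r_neq0.
  apply: ler_wpM2r => //; apply: ler_wpM2l; first lra.
  by rewrite lef_pV2 ?posrE ?exprn_gt0 // mulr_gt0.
have Xn : x * nn <= X.
  rewrite /X; have : x * nn <= x * (c + d - 1) by apply: ler_wpM2l; lra.
  have : x * d <= d by rewrite ler_piMl //; lra.
  move=> h1 h2; have e : x * (c + d - 1) = x * c + x * d - x by ring.
  rewrite /X; lra.
have xn0 : 0 < x * nn by apply: mulr_gt0.
have XX : (x * nn) ^+ 2 <= X ^+ 2 by rewrite ler_sqr ?nnegrE; lra.
have -> : x^-1 / nn ^+ 2 = x * ((x * nn) ^+ 2)^-1.
  by rewrite exprMn; field; rewrite !lt0r_neq0.
apply: ler_wpM2l; first lra.
by rewrite lef_pV2 ?posrE ?exprn_gt0.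
Qed.

Lemma between_itv (R : realType) (u v : R) : u != v ->
  [/\ Order.min u v < Order.max u v, Order.max u v - Order.min u v = `|v - u| &
   [set y | 0 < (y - u) * (v - y)] = `]Order.min u v, Order.max u v[%classic].
Proof.
move=> uv.
have key : forall y, (0 < (y - u) * (v - y)) = ((Order.min u v < y) && (y < Order.max u v)).
  move=> y; have [l|l|l] := ltgtP u v; last by rewrite l eqxx in uv.
    case: (ltP u y) => h1; case: (ltP y v) => h2 /=.
    - by apply: mulr_gt0; lra.
    - by apply/negbTE; rewrite -leNgt; apply: mulr_ge0_le0; lra.
    - by apply/negbTE; rewrite -leNgt; apply: mulr_le0_ge0; lra.
    - lra.
  case: (ltP v y) => h1; case: (ltP y u) => h2 /=.
  - have -> : (y - u) * (v - y) = (u - y) * (y - v) by ring.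
    by apply: mulr_gt0; lra.
  - by apply/negbTE; rewrite -leNgt; apply: mulr_ge0_le0; lra.
  - by apply/negbTE; rewrite -leNgt; apply: mulr_le0_ge0; lra.
  - lra.
split.
- have [l|l|l] := ltgtP u v; last by rewrite l eqxx in uv.
    by [].
  by [].
- have [l|l|l] := ltgtP u v; last by rewrite l eqxx in uv.
    by rewrite gtr0_norm // subr_gt0.
  by rewrite ltr0_norm ?subr_lt0 // opprB.
- by apply/seteqP; split => y /=; rewrite in_itv /= key.
Qed.

Lemma core (R : realType) (q n : nat) (x eps : R) (h : 'M[R]_2) :
  (3 <= q)%N -> Wq q n h -> 0 <= x - eps / 2 -> x + eps / 2 <= 1 -> 0 < eps -> 0 < x ->
  exists c d mn mx : R,
  [/\ 0 <= c, 1 <= d, n.+1%:R <= c + d, mn < mx & 0 <= mn] /\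
  [/\ mob_img h (Veps x eps) = `]mn, mx[%classic,
   mx - mn = eps / ((c * (x - eps / 2) + d) * (c * (x + eps / 2) + d)) &
   `|derive1 (mob h) x| = ((c * x + d) ^+ 2)^-1 ].
Proof.
move=> q3 W lo0 hi1 e0 x0.
have [ha [hb [hc [hd [hab [hcd hD]]]]]] := Wq_good q3 W.
move: ha hb hc hd hab hcd hD.
set a := h ord0 ord0; set b := h ord0 ord_max; set c := h ord_max ord0; set d := h ord_max ord_max.
move=> ha hb hc hd hab hcd hD.
set lo := x - eps / 2 in lo0 *; set hi := x + eps / 2 in hi1 *.
have lh : lo < hi by rewrite /lo /hi; lra.
have cl : 0 <= c * lo by apply: mulr_ge0.
have Pp : 0 < c * lo + d by lra.
have ch : c * lo <= c * hi by apply: ler_wpM2l => //; exact: ltW.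
have Qp : 0 < c * hi + d by lra.
have himg := img_between hD lh hc Pp.
have mobE : mob h = fun t => (a * t + b) / (c * t + d) by [].
set f := fun t => (a * t + b) / (c * t + d) in himg mobE.
have fd := fdiff a b (lt0r_neq0 Pp) (lt0r_neq0 Qp).
rewrite -/f in fd.
have uv : f lo != f hi.
  suff : f hi - f lo != 0 by rewrite subr_eq0 eq_sym.
  rewrite fd.
  apply: mulf_neq0; first apply: mulf_neq0; first exact: D_neq0 hD.
    by rewrite subr_eq0 gt_eqF.
  by rewrite invr_neq0 // mulf_neq0 // lt0r_neq0.
have [mm mE sE] := between_itv uv.
exists c, d, (Order.min (f lo) (f hi)), (Order.max (f lo) (f hi)).
split; split => //.
- rewrite le_min; apply/andP; split; rewrite /f divr_ge0 //; try lra;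
    apply: addr_ge0 => //; apply: mulr_ge0 => //; lra.
- by rewrite /mob_img /Veps mobE himg sE.
- rewrite mE fd normrM normrM (normD1 hD) mul1r normfV ger0_norm; last by rewrite /hi /lo; lra.
  rewrite gtr0_norm; last by apply: mulr_gt0.
  have -> : hi - lo = eps by rewrite /hi /lo; field.
  by rewrite [(c * hi + d) * _]mulrC.
- have Xp : 0 < c * x + d.
    have : c * lo <= c * x by apply: ler_wpM2l => //; rewrite /lo; lra.
    lra.
  have -> : derive1 (mob h) x = (a * d - b * c) / (c * x + d) ^+ 2.
    by apply: (moeb_derive a b); rewrite lt0r_neq0.
  rewrite normrM (normD1 hD) mul1r normfV ger0_norm //.
  exact: sqr_ge0.
Qed.

Unset Implicit Arguments.

Theorem lemma4p6 (R : realType) (q : nat) (x eps : R) :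
  odd q -> (3 <= q)%N -> 0 < x < 1 -> 0 < eps ->
  Veps x eps `<=` `]0, 1[%classic ->
  (* (i) *)
  (forall (n : nat) (h : 'M[R]_2), Wq q n h ->
     exists r : R, leb (mob_img h (Veps x eps)) = r%:E /\
       `| r / muV x eps - x * `|derive1 (mob h) x| |
         <= (`| eps / muV x eps - x | + eps / x) * (r / eps)) /\
  (* (ii) *)
  (exists M : R, 0 < M /\
     forall (y : R) (n : nat) (h : 'M[R]_2),
       0 < y <= 1 -> (1 <= n)%N -> Wq q n h -> mob_img h (Veps x eps) y ->
       exists r : R,
         leb (mob_img h (Veps x eps) `&` `]0, y]%classic) = r%:E /\
         `| r / muV x eps
            - x * `|derive1 (mob h) x| * (if (0 < mob h x) && (mob h x <= y) then 1 else 0) |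
           <= M / (n ^ 2)%:R).
Proof.
move=> _ q3 /andP[x0 x1] e0 hV.
have lo0 : 0 <= x - eps / 2.
  rewrite leNgt; apply/negP => lneg.
  have : `]0, 1[%classic ((x - eps / 2) / 2).
    by apply: hV; rewrite /Veps /= in_itv /=; apply/andP; split; lra.
  by rewrite /= in_itv /= => /andP[h1 _]; lra.
have hi1 : x + eps / 2 <= 1.
  rewrite leNgt; apply/negP => lneg.
  have : `]0, 1[%classic ((x + eps / 2 + 1) / 2).
    by apply: hV; rewrite /Veps /= in_itv /=; apply/andP; split; lra.
  by rewrite /= in_itv /= => /andP[_ h1]; lra.
split.
  move=> n h W.
  have [c [d [mn [mx [[c0 d1 cd mm mn0] [iE rE dE]]]]]] := core q3 W lo0 hi1 e0 x0.
  exists (mx - mn); split; first by rewrite iE leb_oo.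
  rewrite dE rE; apply: part1_alg => //; try lra.
  have : 0 <= c * (x - eps / 2) by apply: mulr_ge0.
  lra.
exists (eps * `|(muV x eps)^-1| / (x - eps / 2) ^+ 2 + x^-1); split.
  apply: ltr_wpDl; last by rewrite invr_gt0.
  apply: divr_ge0; [apply: mulr_ge0; [lra | exact: normr_ge0] | exact: sqr_ge0].
move=> y n h /andP[y0 y1] n1 W hy.
have [c [d [mn [mx [[c0 d1 cd mm mn0] [iE rE dE]]]]]] := core q3 W lo0 hi1 e0 x0.
rewrite iE /= in_itv /= in hy; case/andP: hy => hy1 hy2.
have sE : `]mn, mx[%classic `&` `]0, y]%classic = `]mn, y]%classic.
  apply/seteqP; split => z /=; rewrite !in_itv /=.
    by case=> /andP[h1 h2] /andP[h3 h4]; apply/andP; split.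
  case/andP => h1 h2; split; apply/andP; split => //; lra.
exists (y - mn); split; first by rewrite iE sE leb_oc.
have cd' : n%:R + 1 <= c + d by rewrite natr1.
have n1' : (1 : R) <= n%:R by rewrite ler1n.
have lm : x - eps / 2 = 0 -> (muV x eps)^-1 = 0.
  by rewrite /muV => ->; rewrite invr0 mulr0 ln0 ?invr0.
have hi01 : (if (0 < mob h x) && (mob h x <= y) then 1 else 0) = 0 :> R \/
            (if (0 < mob h x) && (mob h x <= y) then 1 else 0) = 1 :> R.
  by case: ifP => _; [right | left].
have rl : y - mn <= eps / ((c * (x - eps / 2) + d) * (c * (x + eps / 2) + d)) by rewrite -rE; lra.
rewrite dE natrX; apply: part2_alg => //; lra.
Qed.
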